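(* Let $A\in gl(n,\mathbb{C})$ be nilpotent of index $m\ge2$ (i.e. $A^m=0\ne A^{m-1}$), let $L:\mathbb{C}^n\to\mathbb{C}^n$ be the linear map it represents, $K_j=\ker L^j$ for $j=0,\dots,m$, $K_{-1}=\{0\}$, $U_j=K_j\cap K_{j-1}^{\perp}$ and $r_j=\dim U_j$ for $j=1,\dots,m$. Then for every $j\in\{1,\dots,m\}$ there exists an orthonormal basis $\{u^j_1,\dots,u^j_{r_j}\}$ of $U_j$ such that for all $j\ge2$ and all $k\in\{1,\dots,r_j\}$, $$Lu^j_k\in\mathrm{Span}(u^{j-1}_1,\dots,u^{j-1}_k)\oplus^\perp K_{j-2}\quad\text{and}\quad\langle Lu^j_k,u^{j-1}_k\rangle\ne0.$$
   Context: $\mathbb{C}^n$ carries the standard Hermitian inner product $\langle\cdot,\cdot\rangle$; $\perp$ denotes orthogonal complement and $\oplus^\perp$ an orthogonal direct sum. *)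

(* Defs.v *)
(* C^n is modelled by row vectors 'rV[Cplx]_n, where
   Cplx := R[i] is the complex numbers built (mathcomp-real-closed) over
   Stdlib's real numbers R (an rcfType via Rstruct). *)
From HB Require Import structures.
From mathcomp Require Import all_boot all_order all_algebra.
From mathcomp Require Import sesquilinear spectral.
From mathcomp.real_closed Require Import complex.
From mathcomp Require Import Rstruct.
Set Implicit Arguments. Unset Strict Implicit. Unset Printing Implicit Defensive.
Import Order.TTheory GRing.Theory Num.Theory Num.Def.
Local Open Scope ring_scope.

Definition Cplx : numClosedFieldType := (Rdefinitions.R)[i].

(* Standard Hermitian inner product <u, v> = \sum_i u_i * conj (v_i). *)
Definition hdot n (u v : 'rV[Cplx]_n) : Cplx := dotmx u v.

(* Orthogonal complement (w.r.t. hdot) of the row space of B. *)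
Definition horth m n (B : 'M[Cplx]_(m, n)) : 'M[Cplx]_n :=
  orthomx conjC (mx_of_hermitian (hermitian1mx _)) B.

(* The linear map L represented by A : L x = A x for a column vector x;
   on the row vector u = x^T this is (A x)^T = u *m A^T. *)
Definition Lmap n (A : 'M[Cplx]_n) (u : 'rV[Cplx]_n) : 'rV[Cplx]_n :=
  u *m A^T.

(* K_j = ker L^j, as a row space: {u | (A^j u^T)^T = u *m (A^j)^T = 0}. *)
Definition Kspace n (A : 'M[Cplx]_n) (j : nat) : 'M[Cplx]_n :=
  kermx ((A ^+ j)^T).

(* U_j = K_j \cap K_{j-1}^perp  (used for j >= 1). *)
Definition Uspace n (A : 'M[Cplx]_n) (j : nat) : 'M[Cplx]_n :=
  (Kspace A j :&: horth (Kspace A j.-1))%MS.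

Definition spanfam n (v : nat -> 'rV[Cplx]_n) (k : nat) : 'M[Cplx]_n :=
  (\sum_(i < k) <<v i>>)%MS.

(* Main.v *)
Require Import Defs.
From HB Require Import structures.
From mathcomp Require Import all_boot all_order all_algebra.
From mathcomp Require Import sesquilinear spectral.
From mathcomp Require Import zify.
Import Order.TTheory GRing.Theory Num.Theory.
Local Open Scope ring_scope.

Module Helpers.
Set Implicit Arguments. Unset Strict Implicit.
Section Aux.
Variable n : nat.
Implicit Types (u v x y : 'rV[Cplx]_n).

Lemma submxB_ p q (M : 'M[Cplx]_(p, n)) (X Y : 'M[Cplx]_(q, n)) :
  (X <= M)%MS -> (Y <= M)%MS -> (X - Y <= M)%MS.
Proof. by move=> hX hY; apply: addmx_sub => //; rewrite eqmx_opp. Qed.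

Lemma ortho_dotE u v : (u <= horth v)%MS = (hdot u v == 0).
Proof.
rewrite /horth orthomx1E /hdot dotmxE; apply/eqP/eqP => [->|h]; first by rewrite mxE.
by apply/matrixP => i j; rewrite !ord1 h mxE.
Qed.

Lemma horth_sym p q (X : 'M[Cplx]_(p, n)) (Y : 'M[Cplx]_(q, n)) :
  (X <= horth Y)%MS = (Y <= horth X)%MS.
Proof. exact: orthomx_sym. Qed.

Lemma hdot_sub_ortho p (K : 'M[Cplx]_(p, n)) u v :
  (u <= K)%MS -> (v <= horth K)%MS -> hdot u v = 0.
Proof.
move=> uK vK; apply/eqP; rewrite -ortho_dotE.
have : (K <= horth v)%MS by rewrite /horth orthomx_sym.
exact: submx_trans.
Qed.

Lemma hdotDl x y v : hdot (x + y) v = hdot x v + hdot y v.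
Proof. by rewrite /hdot !dotmxE mulmxDl mxE. Qed.

Lemma hdotZl a x v : hdot (a *: x) v = a * hdot x v.
Proof. by rewrite /hdot !dotmxE -scalemxAl mxE. Qed.

Lemma spanfamS (w : nat -> 'rV[Cplx]_n) k :
  spanfam w k.+1 = (spanfam w k + <<w k>>)%MS.
Proof. by rewrite /spanfam big_ord_recr. Qed.

Lemma spanfam_sup (w : nat -> 'rV[Cplx]_n) k i : (i < k)%N -> (w i <= spanfam w k)%MS.
Proof. by move=> ik; apply: (sumsmx_sup (Ordinal ik)) => //; rewrite genmxE. Qed.

Lemma spanfam_sub p (w : nat -> 'rV[Cplx]_n) k (M : 'M[Cplx]_(p, n)) :
  (forall i, (i < k)%N -> (w i <= M)%MS) -> (spanfam w k <= M)%MS.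
Proof. by move=> h; apply/sumsmx_subP => i _; rewrite genmxE h. Qed.

Lemma spanfam_mono (w : nat -> 'rV[Cplx]_n) i k : (i <= k)%N -> (spanfam w i <= spanfam w k)%MS.
Proof.
by move=> ik; apply: spanfam_sub => l li; apply: spanfam_sup; apply: leq_trans ik.
Qed.

Lemma rank_spanfam_le (w : nat -> 'rV[Cplx]_n) k : (\rank (spanfam w k) <= k)%N.
Proof.
elim: k => [|k IH]; first by rewrite /spanfam big_ord0 mxrank0.
rewrite spanfamS; apply: leq_trans (mxrank_adds_leqif _ _) _.
by rewrite genmxE addnC -[k.+1]add1n; apply: leq_add (rank_leq_row _) IH.
Qed.

Lemma rank_spanfam_indep (w : nat -> 'rV[Cplx]_n) k :
  (forall i, (i < k)%N -> ~~ (w i <= spanfam w i)%MS) -> \rank (spanfam w k) = k.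
Proof.
elim: k => [|k IH] h; first by rewrite /spanfam big_ord0 mxrank0.
apply/eqP; rewrite eqn_leq rank_spanfam_le /=.
have IHk : \rank (spanfam w k) = k by rewrite IH // => i ik; apply: h; apply: ltnW.
rewrite -{1}IHk.
rewrite spanfamS; have /mxrank_leqif_sup := addsmxSl (spanfam w k) <<w k>>%MS.
move=> [le eq]; rewrite ltn_neqAle le andbT eq.
apply: contra (h k (ltnSn k)) => H; apply: submx_trans H.
by rewrite -genmxE addsmxSr.
Qed.

End Aux.


Section Step.
Variable n : nat.

Lemma step (V : 'M[Cplx]_n) (r : nat) (w : nat -> 'rV[Cplx]_n) :
  (forall k, (k < r)%N -> (w k <= V)%MS) ->
  (forall k, (k < r)%N -> ~~ (w k <= spanfam w k)%MS) ->
  exists v : nat -> 'rV[Cplx]_n,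
   [/\ (forall k, (k < \rank V)%N -> (v k <= V)%MS),
       (V <= spanfam v (\rank V))%MS,
       (forall k l, (k < \rank V)%N -> (l < \rank V)%N -> hdot (v k) (v l) = (k == l)%:R)
     & forall k, (k < r)%N -> [/\ (k < \rank V)%N, (w k <= spanfam v k.+1)%MS & hdot (w k) (v k) != 0]].
Proof.
move=> wV wind.
pose Wm := \matrix_(i < r) w i.
have rowW : forall i : 'I_r, row i Wm = w i by move=> i; rewrite rowK.
have eqW : (Wm :=: spanfam w r)%MS.
  apply/eqmxP/andP; split.
    by apply/row_subP => i; rewrite rowW; apply: spanfam_sup.
  by apply: spanfam_sub => i ir; rewrite -(rowW (Ordinal ir)) row_sub.
have rW : \rank Wm = r by rewrite eqW rank_spanfam_indep.
have WV : (Wm <= V)%MS by rewrite eqW; apply: spanfam_sub.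
pose E := row_base (V :&: horth Wm)%MS.
have EV : (E <= V)%MS by rewrite eq_row_base capmxSl.
have EWo : (E <= horth Wm)%MS by rewrite eq_row_base capmxSr.
pose A' := col_mx Wm E.
have disj : (Wm :&: E)%MS = 0.
  apply/eqP; rewrite -submx0 -(orthomx_ortho_disj Wm).
  exact: capmxS (submx_refl _) EWo.
have rE : \rank E = \rank (V :&: horth Wm)%MS by rewrite eq_row_base.
have rA : \rank A' = (r + \rank (V :&: horth Wm))%N by rewrite -addsmxE mxrank_disjoint_sum // rW rE.
have freeA : row_free A' by rewrite /row_free rA.
have AV : (A' <= V)%MS by rewrite -addsmxE addsmx_sub WV EV.
have rV : \rank V = \rank A'.
  apply/eqP; rewrite eqn_leq (mxrankS AV) andbT.
  have := mxrank_sum_cap V (horth Wm).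
  have := rank_leq_col (V + horth Wm)%MS.
  have := rank_leq_col Wm.
  rewrite rA /horth rank_ortho rW; lia.
have eqAV : (A' :=: V)%MS.
  by apply/eqmxP; rewrite -(mxrank_leqif_eq AV) rV.
have sn : (r + \rank (V :&: horth Wm)%MS <= n)%N by rewrite -rA rank_leq_col.
pose S := schmidt A'.
have Su : S \is unitarymx := schmidt_unitarymx A' sn.
have eqS : (S :=: V)%MS := eqmx_trans (eqmx_schmidt_free freeA) eqAV.
pose s := (r + \rank (V :&: horth Wm)%MS)%N.
have Vs : \rank V = s by rewrite rV rA.
pose v := fun k : nat => if @insub _ (fun k => k < s)%N 'I_s k is Some i then row i S else 0.
have vE : forall i : 'I_s, v i = row i S by move=> i; rewrite /v valK.
have vV : forall k, (k < s)%N -> (v k <= V)%MS.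
  by move=> k ks; rewrite (vE (Ordinal ks)) -eqS row_sub.
have vON : forall k l, (k < s)%N -> (l < s)%N -> hdot (v k) (v l) = (k == l)%:R.
  by move=> k l ks ls; rewrite (vE (Ordinal ks)) (vE (Ordinal ls)) /hdot (row_unitarymxP Su).
have tri : forall k, (k < r)%N -> (w k <= spanfam v k.+1)%MS.
  move=> k kr; have := row_schmidt_sub A' (lshift (\rank (V :&: horth Wm)%MS) (Ordinal kr)).
  rewrite rowKu rowW /= => /submx_trans; apply.
  apply/sumsmx_subP => i /= ik; rewrite genmxE -vE; apply: spanfam_sup.
  by rewrite ltnS.
exists v; rewrite Vs; split => //.
  by rewrite -eqS; apply/row_subP => i; rewrite -vE; apply: spanfam_sup.
move=> k kr; have ks : (k < s)%N by rewrite /s ltn_addr.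
split => //; first exact: tri.
apply/negP => /eqP h0.
have hk : (w k <= spanfam v k)%MS.
  move: (tri k kr); rewrite spanfamS => /sub_addsmxP [[y z] /= wE].
  have : (z *m <<v k>>%MS <= v k)%MS by apply: submx_trans (submxMl _ _) _; rewrite genmxE.
  case/sub_rVP => a za.
  have y0 : hdot (y *m spanfam v k) (v k) = 0.
    apply: hdot_sub_ortho (submxMl _ _) _.
    rewrite horth_sym; apply: spanfam_sub => i ik.
    by rewrite ortho_dotE (vON _ _ (ltn_trans ik ks) ks) (ltn_eqF ik).
  move: h0; rewrite wE hdotDl y0 add0r za hdotZl vON // eqxx mulr1 => a0.
  by rewrite a0 scale0r addr0 submxMl.
have : (spanfam w k.+1 <= spanfam v k)%MS.
  apply: spanfam_sub => i; rewrite ltnS leq_eqVlt => /orP [/eqP -> //| ik].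
  by apply: submx_trans (tri i (ltn_trans ik kr)) _; apply: spanfam_mono.
move/mxrankS; rewrite rank_spanfam_indep; last first.
  by move=> i ik; apply: wind; apply: leq_trans kr.
by move=> H; have := leq_trans H (rank_spanfam_le v k); rewrite ltnn.
Qed.

End Step.

Section Nil.
Variables (n : nat) (A : 'M[Cplx]_n).

Lemma powT_S j p (B : 'M[Cplx]_(p, n)) :
  B *m (A ^+ j.+1)^T = (B *m (A ^+ j)^T) *m A^T.
Proof. by rewrite exprS -mulmxE trmx_mul mulmxA. Qed.

Lemma powT_S' j p (B : 'M[Cplx]_(p, n)) :
  B *m (A ^+ j.+1)^T = (B *m A^T) *m (A ^+ j)^T.
Proof. by rewrite exprSr -mulmxE trmx_mul mulmxA. Qed.

Lemma K_mono j : (Kspace A j <= Kspace A j.+1)%MS.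
Proof. by rewrite /Kspace sub_kermx powT_S mulmx_ker mul0mx. Qed.

Lemma K_L j (x : 'rV[Cplx]_n) : (x <= Kspace A j.+1)%MS -> (Lmap A x <= Kspace A j)%MS.
Proof. by rewrite /Kspace !sub_kermx /Lmap -powT_S'. Qed.

Lemma K_inj i (x : 'rV[Cplx]_n) :
  (x <= horth (Kspace A i.+1))%MS -> (Lmap A x <= Kspace A i)%MS -> x = 0.
Proof.
move=> xo xL.
have xK : (x <= Kspace A i.+1)%MS by move: xL; rewrite /Kspace !sub_kermx /Lmap powT_S'.
by apply/eqP; rewrite -submx0 -(orthomx_ortho_disj (Kspace A i.+1)) sub_capmx xK.
Qed.

Definition basisP j (f : nat -> 'rV[Cplx]_n) := let r := \rank (Uspace A j) in
  (forall k, (k < r)%N -> (f k <= Uspace A j)%MS) /\ (Uspace A j <= spanfam f r)%MS /\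
  (forall k l, (k < r)%N -> (l < r)%N -> hdot (f k) (f l) = (k == l)%:R).

Definition linkP j (f g : nat -> 'rV[Cplx]_n) :=
  forall k, (k < \rank (Uspace A j))%N ->
   [/\ (k < \rank (Uspace A j.-1))%N,
       (spanfam g k.+1 <= horth (Kspace A (j - 2)%N))%MS,
       (Lmap A (f k) <= addsmx (spanfam g k.+1) (Kspace A (j - 2)%N))%MS
     & hdot (Lmap A (f k)) (g k) != 0].

Lemma base j : exists f, basisP j f.
Proof.
have [v [h1 h2 h3 _]] := @step _ (Uspace A j) 0 (fun _ => 0) (fun k (kr : (k < 0)%N) => False_ind _ (notF kr))
  (fun k (kr : (k < 0)%N) => False_ind _ (notF kr)).
by exists v; split => //; split.
Qed.

End Nil.

Section Nil2.
Variables (n : nat) (A : 'M[Cplx]_n).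
Local Notation basisP := (basisP A). Local Notation linkP := (linkP A).
Lemma compl_sub p (K : 'M[Cplx]_(p, n)) (y : 'rV[Cplx]_n) :
  (y - y *m proj_ortho (horth K) <= K)%MS.
Proof. by have := proj_ortho_compl_sub (horth K) y; rewrite /horth ortho_id. Qed.

Lemma proj_sub p (K : 'M[Cplx]_(p, n)) (y : 'rV[Cplx]_n) :
  (y *m proj_ortho (horth K) <= horth K)%MS.
Proof. exact: proj_ortho_sub. Qed.

Lemma level i f : basisP i.+2 f -> exists g, basisP i.+1 g /\ linkP i.+2 f g.
Proof.
move=> hf; have [fU [Uf fON]] := hf.
set r := \rank (Uspace A i.+2) in fU Uf fON.
pose Q := proj_ortho (horth (Kspace A i)).
pose w k := Lmap A (f k) *m Q.
have Ui1 : Uspace A i.+1 = (Kspace A i.+1 :&: horth (Kspace A i))%MS := erefl.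
have Ui2 : Uspace A i.+2 = (Kspace A i.+2 :&: horth (Kspace A i.+1))%MS := erefl.
have compl : forall y : 'rV_n, (y - y *m Q <= Kspace A i)%MS.
  by move=> y; apply: compl_sub.
have wo : forall k, (w k <= horth (Kspace A i))%MS by move=> k; apply: proj_sub.
have fK : forall k, (k < r)%N -> (Lmap A (f k) <= Kspace A i.+1)%MS.
  by move=> k kr; apply: K_L; have := fU k kr; rewrite Ui2 sub_capmx => /andP [].
have wU : forall k, (k < r)%N -> (w k <= Uspace A i.+1)%MS.
  move=> k kr; rewrite Ui1 sub_capmx wo andbT.
  have e : w k = Lmap A (f k) - (Lmap A (f k) - Lmap A (f k) *m Q) by rewrite subKr.
  rewrite e; apply: submxB_ (fK k kr) _.
  have := compl (Lmap A (f k)); move/submx_trans; apply; exact: K_mono.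
have wind : forall k, (k < r)%N -> ~~ (w k <= spanfam w k)%MS.
  move=> k kr; apply/negP => hw.
  pose F := A^T *m Q.
  have wF : forall l, w l = f l *m F by move=> l; rewrite /w /Lmap /F mulmxA.
  have : (w k <= spanfam f k *m F)%MS.
    apply: submx_trans hw _; apply: spanfam_sub => l lk.
    by rewrite wF submxMr // spanfam_sup.
  case/submxP => D wkE.
  pose y := D *m spanfam f k.
  pose x := f k - y.
  have xF : x *m F = 0 by rewrite /x mulmxBl -wF wkE mulmxA subrr.
  have yU : (y <= Uspace A i.+2)%MS.
    apply: submx_trans (submxMl _ _) _; apply: spanfam_sub => l lk.
    exact: fU (ltn_trans lk kr).
  have xU : (x <= Uspace A i.+2)%MS by apply: submxB_ (fU k kr) yU.
  have x0 : x = 0.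
    apply: (@K_inj _ A i); first by apply: submx_trans xU _; rewrite Ui2 capmxSr.
    by have := compl (Lmap A x); rewrite /Lmap -mulmxA xF subr0.
  have fky : f k = x + y by rewrite /x subrK.
  have fks : (f k <= spanfam f k)%MS by rewrite fky x0 add0r submxMl.
  have fko : (f k <= horth (spanfam f k))%MS.
    rewrite horth_sym; apply: spanfam_sub => l lk.
    by rewrite ortho_dotE (fON _ _ (ltn_trans lk kr) kr) (ltn_eqF lk).
  have := hdot_sub_ortho fks fko.
  by rewrite fON // eqxx => /eqP; rewrite oner_eq0.
have [g [gU Ug gON tri]] := step wU wind.
exists g; split; first by split => //; split.
move=> k kr; have [ks wg nz] := tri k kr.
have e2 : (i.+2 - 2 = i)%N by rewrite !subSS subn0.
rewrite e2 /=.
have gKo : forall l, (l < \rank (Uspace A i.+1))%N -> (g l <= horth (Kspace A i))%MS.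
  by move=> l ls; apply: submx_trans (gU l ls) _; rewrite Ui1 capmxSr.
have dec : Lmap A (f k) = w k + (Lmap A (f k) - w k) by rewrite addrC subrK.
split; first exact: ks.
- by apply: spanfam_sub => l lk; apply: gKo; apply: leq_ltn_trans ks.
- by rewrite dec; apply: addmx_sub_adds wg (compl _).
- by rewrite dec hdotDl (hdot_sub_ortho (compl _) (gKo k ks)) addr0.
Qed.


End Nil2.

Lemma main_ind n (A : 'M[Cplx]_n) m : (1 <= m)%N -> forall d, (d < m)%N ->
  exists u : nat -> nat -> 'rV[Cplx]_n,
   (forall j, (m - d <= j <= m)%N -> basisP A j (u j)) /\
   (forall j, (m - d < j <= m)%N -> linkP A j (u j) (u j.-1)).
Proof.
move=> m1; elim=> [|d IH] dm.
  have [f hf] := base A m; exists (fun _ => f); split.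
    move=> j; rewrite subn0 => /andP [a b].
    by have -> : j = m by apply/eqP; rewrite eqn_leq a b.
  by move=> j; rewrite subn0 => /andP [a b]; have := leq_trans a b; rewrite ltnn.
have [u [hb hl]] := IH (ltnW dm).
have ti : (m - d = (m - d - 2).+2)%N by lia.
move: ti; set i := (m - d - 2)%N => ti.
have ht : basisP A i.+2 (u i.+2) by apply: hb; rewrite -ti leqnn leq_subr.
have [g [gb gl]] := level ht.
exists (fun j => if j == i.+1 then g else u j); split.
  move=> j /andP [a b]; case: eqP => [->|ne]; first exact: gb.
  by apply: hb; rewrite b andbT; lia.
move=> j /andP [a b].
rewrite (_ : (j == i.+1) = false); last by apply/eqP; lia.
case: (eqVneq j i.+2) => [-> | ne2]; first by rewrite /= eqxx; exact: gl.
rewrite (_ : (j.-1 == i.+1) = false); last by apply/eqP; lia.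
by apply: hl; lia.
Qed.

End Helpers.
Import Helpers.

Theorem proposition4 (n m : nat) (A : 'M[Cplx]_n) :
  (2 <= m)%N -> A ^+ m = 0 -> A ^+ m.-1 != 0 ->
  exists u : nat -> nat -> 'rV[Cplx]_n,
    (forall j, (1 <= j <= m)%N ->
       let r := \rank (Uspace A j) in
       (forall k, (k < r)%N -> (u j k <= Uspace A j)%MS) /\
       (Uspace A j <= spanfam (u j) r)%MS /\
       (forall k l, (k < r)%N -> (l < r)%N ->
          hdot (u j k) (u j l) = (k == l)%:R)) /\
    (forall j, (2 <= j <= m)%N ->
       forall k, (k < \rank (Uspace A j))%N ->
         [/\ (k < \rank (Uspace A j.-1))%N,
             (spanfam (u j.-1) k.+1 <= horth (Kspace A (j - 2)%N))%MS,
             (Lmap A (u j k) <= addsmx (spanfam (u j.-1) k.+1) (Kspace A (j - 2)%N))%MS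
           & hdot (Lmap A (u j k)) (u j.-1 k) != 0]).
Proof.
move=> m2 _ _.
have m1 : (1 <= m)%N by lia.
have dm : (m.-1 < m)%N by lia.
have [u [hb hl]] := @main_ind _ A m m1 _ dm.
exists u; split.
  by move=> j hj; apply: hb; lia.
by move=> j hj; apply: hl; lia.
Qed.
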